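(* Let $R$ be a commutative ring with identity. Then the cozero-divisor graph $\Gamma'(R)$ is planar if and only if $\Gamma''_I(R)$ is planar for every ideal $I$ of $R$.
   Context: $\Gamma'(R)$ is the simple undirected graph whose vertices are the nonzero non-unit elements of $R$, with distinct vertices $x,y$ adjacent if and only if $x\notin yR$ and $y\notin xR$. For an ideal $I$ of $R$, $\Gamma''_I(R)$ is the simple undirected graph whose vertex set is $\{x\in R\setminus I : xR+I\neq R\}$, with distinct vertices $x,y$ adjacent if and only if $x\notin yR+I$ and $y\notin xR+I$. A graph is planar if it can be drawn in the plane with edges meeting only at their endpoints. *)

(* Defs.v *)
From Stdlib Require Import Rdefinitions Raxioms RIneq Rbasic_fun.
From HB Require Import structures.
From mathcomp Require Import all_boot all_algebra.

Set Implicit Arguments.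
Unset Strict Implicit.
Unset Printing Implicit Defensive.

Import GRing.Theory.

Definition point := (Rdefinitions.R * Rdefinitions.R)%type.

Definition pdist (p q : point) : Rdefinitions.R :=
  Rmax (Rabs (Rminus (fst p) (fst q))) (Rabs (Rminus (snd p) (snd q))).

Definition in01 (t : Rdefinitions.R) : Prop := Rle R0 t /\ Rle t R1.
Definition in01o (t : Rdefinitions.R) : Prop := Rlt R0 t /\ Rlt t R1.

Definition cont01 (g : Rdefinitions.R -> point) : Prop :=
  forall t, in01 t -> forall eps, Rlt R0 eps ->
    exists delta, Rlt R0 delta /\
      forall s, in01 s -> Rlt (Rabs (Rminus s t)) delta ->
        Rlt (pdist (g s) (g t)) eps.

Definition arc (g : Rdefinitions.R -> point) : Prop :=
  cont01 g /\ (forall s t, in01 s -> in01 t -> g s = g t -> s = t).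

(* A graph on vertex type V with symmetric irreflexive adjacency adj is
   planar if there is an injective placement of the vertices and, for
   each edge {x,y}, an arc from x to y, such that the interior of an arc
   contains no vertex, and the interiors of arcs of distinct edges are
   disjoint.  (edge x y is the arc chosen for the ordered pair; for the
   same unordered edge we may use either orientation.) *)
Definition planar (V : Type) (adj : V -> V -> Prop) : Prop :=
  exists (pos : V -> point) (edge : V -> V -> Rdefinitions.R -> point),
    (forall x y, pos x = pos y -> x = y) /\
    (forall x y, adj x y ->
       arc (edge x y) /\ edge x y R0 = pos x /\ edge x y R1 = pos y /\
       (forall t z, in01o t -> edge x y t <> pos z)) /\
    (forall x y u v, adj x y -> adj u v ->
       ~ ((x = u /\ y = v) \/ (x = v /\ y = u)) ->
       forall s t, in01o s -> in01o t -> edge x y s <> edge u v t).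

Local Open Scope ring_scope.

Definition is_ideal (R : comPzRingType) (I : R -> Prop) : Prop :=
  I 0 /\ (forall x y, I x -> I y -> I (x - y)) /\
  (forall r x, I x -> I (r * x)).

Definition is_unit (R : comPzRingType) (x : R) : Prop := exists y, x * y = 1.

Definition in_principal (R : comPzRingType) (x y : R) : Prop :=
  exists r, x = y * r.

Definition in_principal_plus (R : comPzRingType) (I : R -> Prop) (z x : R)
  : Prop := exists r i, I i /\ z = x * r + i.

Definition cozero_vertex (R : comPzRingType) (x : R) : Prop :=
  x <> 0 /\ ~ is_unit x.

Definition cozero_graph (R : comPzRingType) : Type :=
  {x : R | cozero_vertex x}.

Definition cozero_adj (R : comPzRingType) (x y : cozero_graph R) : Prop :=
  x <> y /\ ~ in_principal (proj1_sig x) (proj1_sig y) /\ ~ in_principal (proj1_sig y) (proj1_sig x).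

(* Gamma''_I(R): vertices x in R \ I with xR + I <> R *)
Definition cozeroI_vertex (R : comPzRingType) (I : R -> Prop) (x : R) : Prop :=
  ~ I x /\ ~ (forall z : R, in_principal_plus I z x).

Definition cozeroI_graph (R : comPzRingType) (I : R -> Prop) : Type :=
  {x : R | cozeroI_vertex I x}.

Definition cozeroI_adj (R : comPzRingType) (I : R -> Prop)
  (x y : cozeroI_graph I) : Prop :=
  x <> y /\ ~ in_principal_plus I (proj1_sig x) (proj1_sig y) /\
  ~ in_principal_plus I (proj1_sig y) (proj1_sig x).

(* Main.v *)
Require Import Defs.
From HB Require Import structures.
From mathcomp Require Import all_boot all_algebra.
From Stdlib Require Import ProofIrrelevance.

Import GRing.Theory.
Local Open Scope ring_scope.

Lemma planar_sub (V W : Type) (adjV : V -> V -> Prop) (adjW : W -> W -> Prop)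
  (f : V -> W) : (forall x y, f x = f y -> x = y) ->
  (forall x y, adjV x y -> adjW (f x) (f y)) -> planar adjW -> planar adjV.
Proof.
move=> finj fadj [pos [edge [Hp [He Hd]]]].
exists (fun x => pos (f x)), (fun x y => edge (f x) (f y)).
split; first by move=> x y /Hp /finj.
split.
  move=> x y /fadj /He [A [B [C D]]]; split; first exact: A.
  by split; [exact: B|split; [exact: C| move=> t z Ht; exact: D]].
move=> x y u v /fadj Hxy /fadj Huv Hn s t Hs Ht.
apply: (Hd _ _ _ _ Hxy Huv) => //.
move=> [[/finj E1 /finj E2]|[/finj E1 /finj E2]]; apply: Hn; by [left|right].
Qed.

Theorem proposition3p1 (R : comPzRingType) :
  planar (@cozero_adj R) <->
  (forall I : R -> Prop, is_ideal I -> planar (@cozeroI_adj R I)).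
Proof.
split.
- move=> HP I [I0 [Isub Imul]].
  have vert : forall x : cozeroI_graph I, cozero_vertex (proj1_sig x).
    move=> [x [nIx nU]] /=; split.
      by move=> x0; apply: nIx; rewrite x0.
    move=> [y xy]; apply: nU => z; exists (y * z), 0; split => //.
    by rewrite addr0 mulrA xy mul1r.
  pose f (x : cozeroI_graph I) : cozero_graph R := exist _ (proj1_sig x) (vert x).
  apply: (@planar_sub _ _ _ _ f) HP.
    move=> [x px] [y py] [] /= E; subst y; by rewrite (proof_irrelevance _ px py).
  move=> [x px] [y py] [Hne [H1 H2]]; split.
    move=> [] /= E; subst y; apply: Hne; by rewrite (proof_irrelevance _ px py).
  split; move=> [r Hr]; [apply: H1|apply: H2]; exists r, 0; rewrite addr0; split=> //; exact: Hr.
- move=> H.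
  pose I := fun x : R => x = 0.
  have HI : is_ideal I.
    rewrite /I; split => //; split; first by move=> x y -> ->; rewrite subr0.
    by move=> r x ->; rewrite mulr0.
  have vert : forall x : cozero_graph R, cozeroI_vertex I (proj1_sig x).
    move=> [x [nz nU]] /=; split => //.
    move=> Hall; have [r [i [-> E]]] := Hall 1; apply: nU; exists r.
    by rewrite E addr0.
  pose f (x : cozero_graph R) : cozeroI_graph I := exist _ (proj1_sig x) (vert x).
  apply: (@planar_sub _ _ _ _ f) (H I HI).
    move=> [x px] [y py] [] /= E; subst y; by rewrite (proof_irrelevance _ px py).
  move=> [x px] [y py] [Hne [H1 H2]]; split.
    move=> [] /= E; subst y; apply: Hne; by rewrite (proof_irrelevance _ px py).
  split; move=> [r [i [-> Hr]]]; [apply: H1|apply: H2]; exists r; move: Hr => /= ->; by rewrite addr0.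
Qed.
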